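(* For every regular language $L\subseteq\Sigma^*$, the nondeterministic syntactic complexity $\mathrm{nsyn}(L)$ equals the least number of states of any subatomic nfa accepting $L$.
   Context: $\mathrm{LQ}(L)$ is the finite semilattice (under $\subseteq$) of all finite unions, including $\emptyset$, of left derivatives $u^{-1}L=\{w:uw\in L\}$. The syntactic monoid $\mathrm{Syn}(L)$ is $\Sigma^*$ modulo $v\equiv_L w\iff\forall x,y\,(xvy\in L\Leftrightarrow xwy\in L)$, with classes $[w]_L$. For a finite semilattice $S$, $\mathbf{JSL}(S,S)$ is the monoid of join-preserving maps $S\to S$ with $f\cdot g:=g\circ f$. A boolean representation of a monoid $M$ is a finite semilattice $S$ with a monoid morphism $\rho\colon M\to\mathbf{JSL}(S,S)$; its degree is $|J(S)|$, the number of join-irreducible elements of $S$. $\rho_2$ extends $\rho_1$ if there is an injective join-preserving $f\colon S_1\to S_2$ with $f(\rho_1(m)(s))=\rho_2(m)(f(s))$ for all $m\in M$, $s\in S_1$. The canonical representation is $\kappa_L\colon\mathrm{Syn}(L)\to\mathbf{JSL}(\mathrm{LQ}(L),\mathrm{LQ}(L))$, $[w]_L\mapsto(K\mapsto w^{-1}K)$. $\mathrm{nsyn}(L)$ is the least degree of a boolean representation of $\mathrm{Syn}(L)$ extending $\kappa_L$. An nfa (finite states, transition relations, sets of initial and final states) accepting $L$ is subatomic if every state accepts a language in the boolean subalgebra of $\mathcal{P}(\Sigma^* )$ generated by all two-sided derivatives $u^{-1}Lv^{-1}=\{w:uwv\in L\}$. *)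

(* Defs.v *)
From mathcomp Require Import all_boot.
Set Warnings "-notation-overridden".
Set Implicit Arguments. Unset Strict Implicit. Unset Printing Implicit Defensive.

Section Lang.
Variable Sigma : finType.

Definition word := seq Sigma.
Definition lang := word -> bool.

Fixpoint dfa_run (Q : finType) (delta : Sigma -> Q -> Q) (q : Q) (w : word) : Q :=
  if w is a :: w' then dfa_run delta (delta a q) w' else q.

Definition regular (L : lang) : Prop :=
  exists (Q : finType) (delta : Sigma -> Q -> Q) (q0 : Q) (F : pred Q),
    forall w, L w = F (dfa_run delta q0 w).

Definition lderiv (u : word) (K : lang) : lang := fun w => K (u ++ w).
Definition deriv2 (u v : word) (K : lang) : lang := fun w => K (u ++ w ++ v).

(** Membership in LQ(L): finite unions (incl. the empty one) of left derivatives. *)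
Definition inLQ (L : lang) (K : lang) : Prop :=
  exists us : seq word, forall w, K w = has (fun u => lderiv u L w) us.

Definition lunion (K K' : lang) : lang := fun w => K w || K' w.
Definition lempty : lang := fun _ => false.

Definition syn_eq (L : lang) (v w : word) : Prop :=
  forall x y, L (x ++ v ++ y) = L (x ++ w ++ y).

Inductive in_bool_alg (G : lang -> Prop) : lang -> Prop :=
| ba_gen K : G K -> in_bool_alg G K
| ba_empty : in_bool_alg G lempty
| ba_compl K : in_bool_alg G K -> in_bool_alg G (fun w => ~~ K w)
| ba_union K K' : in_bool_alg G K -> in_bool_alg G K' -> in_bool_alg G (lunion K K')
| ba_ext K K' : in_bool_alg G K -> (forall w, K w = K' w) -> in_bool_alg G K'.

Definition two_sided_derivs (L : lang) (K : lang) : Prop :=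
  exists u v, forall w, K w = deriv2 u v L w.

Record nfa := Nfa {
  nstate : finType;
  ndelta : Sigma -> nstate -> nstate -> bool;
  ninit : pred nstate;
  nfinal : pred nstate }.

Fixpoint nfa_acc (A : nfa) (q : nstate A) (w : word) : bool :=
  if w is a :: w' then [exists q', ndelta a q q' && @nfa_acc A q' w'] else nfinal q.

Definition nfa_accepts (A : nfa) (L : lang) : Prop :=
  forall w, L w = [exists q, ninit q && @nfa_acc A q w].

Definition subatomic (A : nfa) (L : lang) : Prop :=
  forall q : nstate A, in_bool_alg (two_sided_derivs L) (@nfa_acc A q).

End Lang.

Record jsl := JSL {
  jcar :> finType;
  jjoin : jcar -> jcar -> jcar;
  jbot : jcar;
  _ : associative jjoin;
  _ : commutative jjoin;
  _ : idempotent_op jjoin;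
  _ : left_id jbot jjoin }.

Definition join_pres (S T : jsl) (f : S -> T) : Prop :=
  f (jbot S) = jbot T /\ forall x y, f (jjoin x y) = jjoin (f x) (f y).

Definition join_irr (S : jsl) (x : S) : bool :=
  (x != jbot S) && [forall y : S, forall z : S, (x == jjoin y z) ==> (x == y) || (x == z)].

Definition degree (S : jsl) : nat := #|[pred x : S | join_irr x]|.

(** A boolean representation of Syn(L) of degree n extending kappa_L.
    A monoid morphism rho : Syn(L) -> JSL(S,S) (with f.g := g o f) is encoded as
    a map on words that is a monoid morphism Sigma^* -> JSL(S,S) and is constant on
    syntactic classes (universal property of the quotient monoid Sigma^*/==_L). *)
Definition nsyn_degree (Sigma : finType) (L : lang Sigma) (n : nat) : Prop :=
  exists (S : jsl) (rho : word Sigma -> S -> S),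
    [/\ forall w, join_pres (rho w),
        (forall s, rho [::] s = s) /\
        forall v w s, rho (v ++ w) s = rho w (rho v s),
        forall v w, syn_eq L v w -> forall s, rho v s = rho w s,
        (exists f : lang Sigma -> S,
           [/\ f (@lempty Sigma) = jbot S,
               forall K K', inLQ L K -> inLQ L K' -> f (lunion K K') = jjoin (f K) (f K'),
               forall K K', inLQ L K -> inLQ L K' -> f K = f K' -> forall w, K w = K' w &
               forall w K, inLQ L K -> f (lderiv w K) = rho w (f K)])
      & degree S = n].

Definition subatomic_size (Sigma : finType) (L : lang Sigma) (n : nat) : Prop :=
  exists A : nfa Sigma, [/\ nfa_accepts A L, subatomic A L & #|nstate A| = n].

Definition least (P : nat -> Prop) (n : nat) : Prop := P n /\ forall m, P m -> n <= m.

(* Main.v *)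
Require Import Defs.
From mathcomp Require Import all_boot.
From Stdlib Require Import ClassicalEpsilon FunctionalExtensionality.
Set Implicit Arguments. Unset Strict Implicit. Unset Printing Implicit Defensive.

Definition pdec (P : Prop) : bool := if excluded_middle_informative P then true else false.
Lemma pdecP (P : Prop) : reflect P (pdec P).
Proof. rewrite /pdec; case: excluded_middle_informative => H; constructor => //. Qed.
Lemma pdec_iff (P P' : Prop) : (P <-> P') -> pdec P = pdec P'.
Proof. move=> H; apply/pdecP/pdecP; tauto. Qed.

Section BA.
Variable Sigma : finType.
Variable G : lang Sigma -> Prop.

Lemma ba_full : in_bool_alg G (fun _ => true).
Proof. apply: ba_ext; first exact: (ba_compl (ba_empty G)). by []. Qed.

Lemma ba_has (T : Type) (s : seq T) (P : T -> lang Sigma) :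
  (forall t, in_bool_alg G (P t)) -> in_bool_alg G (fun w => has (fun t => P t w) s).
Proof.
move=> HP; elim: s => [|t s IH] /=.
  by apply: ba_ext; first exact: ba_empty.
by apply: ba_ext; first exact: (ba_union (HP t) IH).
Qed.

Lemma ba_all (T : Type) (s : seq T) (P : T -> lang Sigma) :
  (forall t, in_bool_alg G (P t)) -> in_bool_alg G (fun w => all (fun t => P t w) s).
Proof.
move=> HP; apply: ba_ext.
  apply: ba_compl; apply: (@ba_has _ s (fun t w => ~~ P t w)) => t; exact: ba_compl.
by move=> w /=; rewrite -all_predC; apply: eq_all => t /=; rewrite negbK.
Qed.

Lemma ba_eqb (K : lang Sigma) (b : bool) :
  in_bool_alg G K -> in_bool_alg G (fun w => K w == b).
Proof.
move=> HK; case: b.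
  by apply: ba_ext; first exact: HK; move=> w; rewrite eqb_id.
by apply: ba_ext; first exact: (ba_compl HK); move=> w; rewrite eqbF_neg.
Qed.
End BA.

Section Reg.
Variable Sigma : finType.
Variable L : lang Sigma.

Lemma dfa_run_cat (Q : finType) (d : Sigma -> Q -> Q) q x y :
  dfa_run d q (x ++ y) = dfa_run d (dfa_run d q x) y.
Proof. by elim: x q => [|a x IH] q //=. Qed.

Lemma ba_syn K : in_bool_alg (two_sided_derivs L) K ->
  forall v w, syn_eq L v w -> forall u, K (v ++ u) = K (w ++ u).
Proof.
elim => {K}.
- move=> K [x [y Hxy]] v w Hs u; rewrite !Hxy /deriv2 -!catA; exact: Hs.
- by [].
- by move=> K _ IH v w Hs u /=; rewrite (IH v w Hs).
- by move=> K K' _ IH _ IH' v w Hs u; rewrite /lunion (IH v w Hs) (IH' v w Hs).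
- by move=> K K' _ IH HK v w Hs u; rewrite -!HK (IH v w Hs).
Qed.

Lemma syn_closed_ba K : regular L ->
  (forall v w, syn_eq L v w -> K v = K w) -> in_bool_alg (two_sided_derivs L) K.
Proof.
move=> [Q [d [q0 [F hL]]]] HK.
pose realized (r : Q * {set Q}) := exists xy : word Sigma * word Sigma,
  dfa_run d q0 xy.1 = r.1 /\ forall q, F (dfa_run d q xy.2) = (q \in r.2).
pose wit r : option (word Sigma * word Sigma) :=
  match excluded_middle_informative (realized r) with
  | left H => Some (proj1_sig (constructive_indefinite_description _ H))
  | right _ => None end.
have witS r : realized r -> exists xy, wit r = Some xy /\
   (dfa_run d q0 xy.1 = r.1 /\ forall q, F (dfa_run d q xy.2) = (q \in r.2)).
  rewrite /wit; case: excluded_middle_informative => // H _.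
  case: constructive_indefinite_description => xy Hxy /=; by exists xy.
pose Gr r : lang Sigma := if wit r is Some xy then deriv2 xy.1 xy.2 L else @lempty Sigma.
have GrB r : in_bool_alg (two_sided_derivs L) (Gr r).
  rewrite /Gr; case: (wit r) => [xy|]; last exact: ba_empty.
  by apply: ba_gen; exists xy.1, xy.2.
pose sg v := [ffun r => Gr r v].
have sgS v w : sg v = sg w -> syn_eq L v w.
  move=> Hsg x y.
  pose r := (dfa_run d q0 x, [set q | F (dfa_run d q y)]).
  have [xy [Hw [H1 H2]]] : exists xy, wit r = Some xy /\
     (dfa_run d q0 xy.1 = r.1 /\ forall q, F (dfa_run d q xy.2) = (q \in r.2)).
    apply: witS; exists (x, y); split => // q; by rewrite inE.
  have E u : Gr r u = L (x ++ u ++ y).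
    rewrite /Gr Hw /deriv2 !hL !(dfa_run_cat d) H1 H2 /= inE; by rewrite ?(dfa_run_cat d).
  by rewrite -!E -!(ffunE (fun r => Gr r _)) -/(sg v) Hsg.
pose bs := [seq b <- enum {ffun Q * {set Q} -> bool} | pdec (exists w, K w /\ sg w = b)].
have HB : in_bool_alg (two_sided_derivs L)
   (fun v : word Sigma => has (fun b : {ffun Q * {set Q} -> bool} => all (fun r => Gr r v == b r) (enum {: Q * {set Q}})) bs).
  apply: (@ba_has _ _ _ bs (fun (b : {ffun Q * {set Q} -> bool}) (v : word Sigma) => all (fun r => Gr r v == b r) (enum {: Q * {set Q}}))) => b.
  apply: (@ba_all _ _ _ (enum {: Q * {set Q}}) (fun r (v : word Sigma) => Gr r v == b r)) => r; exact: ba_eqb.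
apply: (ba_ext HB).
move=> v; apply/hasP/idP.
  move=> [b]; rewrite mem_filter => /andP [/pdecP [w [Kw Hw]] _] /allP Hall.
  have Hvb : sg v = b by apply/ffunP => r; rewrite ffunE; apply/eqP/Hall; rewrite mem_enum.
  by rewrite (HK v w) //; apply: sgS; rewrite Hvb Hw.
move=> Kv; exists (sg v).
  by rewrite mem_filter mem_enum andbT; apply/pdecP; exists v.
by apply/allP => r _; rewrite ffunE.
Qed.
End Reg.

Section JSLTheory.
Variable S : jsl.
Lemma jA : associative (@jjoin S). Proof. by case: S. Qed.
Lemma jC : commutative (@jjoin S). Proof. by case: S. Qed.
Lemma jI : idempotent_op (@jjoin S). Proof. by case: S. Qed.
Lemma j0 : left_id (jbot S) (@jjoin S). Proof. by case: S. Qed.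

Definition le (x y : S) := jjoin x y == y.
Lemma le_refl x : le x x. Proof. by rewrite /le jI. Qed.
Lemma le_trans x y z : le x y -> le y z -> le x z.
Proof. by rewrite /le => /eqP H1 /eqP H2; rewrite -H2 jA H1. Qed.
Lemma le_anti x y : le x y -> le y x -> x = y.
Proof. by rewrite /le => /eqP H1 /eqP H2; rewrite -H1 -{1}H2 jC. Qed.
Lemma le_bot x : le (jbot S) x. Proof. by rewrite /le j0. Qed.
Lemma le_joinl x y : le x (jjoin x y). Proof. by rewrite /le jA jI. Qed.
Lemma le_joinr x y : le y (jjoin x y). Proof. by rewrite jC le_joinl. Qed.
Lemma le_join x y z : le (jjoin x y) z = le x z && le y z.
Proof.
apply/idP/andP.
  by move=> H; split; apply: le_trans H; [apply: le_joinl | apply: le_joinr].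
by rewrite /le => -[/eqP H1 /eqP H2]; rewrite -jA H2 H1.
Qed.

Section Decomp.
Variable T : Type.
Variable phi : S -> T -> bool.
Hypothesis phi0 : forall t, phi (jbot S) t = false.
Hypothesis phiJ : forall x y t, phi (jjoin x y) t = phi x t || phi y t.

Lemma phi_mono x y t : le x y -> phi x t -> phi y t.
Proof. by rewrite /le => /eqP <- H; rewrite phiJ H. Qed.

Lemma decomp s t : phi s t = [exists j, [&& join_irr j, le j s & phi j t]].
Proof.
apply/idP/existsP; last by move=> [j /and3P [_ H1 H2]]; apply: phi_mono H1 H2.
suff H : forall k s, #|[pred u | le u s]| <= k -> phi s t ->
    exists j, [&& join_irr j, le j s & phi j t] by apply: H.
elim=> [|k IH] {}s Hk Hs.
  by move: Hk; rewrite leqn0 => /eqP/card0_eq/(_ s); rewrite inE le_refl.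
case: (boolP (s == jbot S)) => [/eqP Es|nbot]; first by move: Hs; rewrite Es phi0.
case: (boolP (join_irr s)) => Hji; first by exists s; rewrite Hji le_refl Hs.
have [y [z [Es [ny nz]]]] : exists y z, s = jjoin y z /\ s != y /\ s != z.
  move: Hji; rewrite /join_irr nbot /= => /forallPn [y /forallPn [z]].
  by rewrite negb_imply negb_or => /andP [/eqP Es /andP [ny nz]]; exists y, z.
have lt_card u : u != s -> le u s -> #|[pred v | le v u]| < #|[pred v | le v s]|.
  move=> nus lus; apply: proper_card; apply/properP; split.
    by apply/subsetP => v; rewrite !inE => /le_trans; apply.
  exists s; first by rewrite inE le_refl.
  rewrite inE; apply/negP => lsu; move: nus; by rewrite (le_anti lus lsu) eqxx.
move: Hs; rewrite {1}Es phiJ => /orP [Hy|Hz].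
  have ly : le y s by rewrite Es le_joinl.
  have [j /and3P [J1 J2 J3]] := IH y (leq_trans (lt_card y ltac:(by rewrite eq_sym) ly) Hk) Hy.
  by exists j; rewrite J1 J3 (le_trans J2 ly).
have lz : le z s by rewrite Es le_joinr.
have [j /and3P [J1 J2 J3]] := IH z (leq_trans (lt_card z ltac:(by rewrite eq_sym) lz) Hk) Hz.
by exists j; rewrite J1 J3 (le_trans J2 lz).
Qed.
End Decomp.
End JSLTheory.

Section LQ.
Variable Sigma : finType.
Variable L : lang Sigma.

Lemma LQ_L : inLQ L L.
Proof. by exists [:: [::]] => w /=; rewrite /lderiv orbF. Qed.

Lemma LQ_lderiv w K : inLQ L K -> inLQ L (lderiv w K).
Proof.
move=> [us Hus]; exists (map (fun u => u ++ w) us) => v.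
by rewrite /lderiv Hus has_map; apply: eq_has => u /=; rewrite /lderiv catA.
Qed.

Lemma LQ_union K K' : inLQ L K -> inLQ L K' -> inLQ L (lunion K K').
Proof. by move=> [us H] [us' H']; exists (us ++ us') => w; rewrite has_cat /lunion H H'. Qed.

Lemma K0_exists : regular L -> exists K0, [/\ inLQ L K0, K0 [::] = false &
   forall u, ~~ L u -> forall w, L (u ++ w) -> K0 w].
Proof.
move=> [Q [d [q0 [F hL]]]].
pose wit (q : Q) : option (word Sigma) :=
  match excluded_middle_informative (exists u, dfa_run d q0 u = q) with
  | left H => Some (proj1_sig (constructive_indefinite_description _ H))
  | right _ => None end.
have witS u : exists2 u', wit (dfa_run d q0 u) = Some u' & dfa_run d q0 u' = dfa_run d q0 u.
  rewrite /wit; case: excluded_middle_informative => [H|[]]; last by exists u.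
  by case: constructive_indefinite_description => u' Hu' /=; exists u'.
pose ws := pmap wit (enum Q).
pose us0 := [seq u <- ws | ~~ L u].
exists (fun w => has (fun u => lderiv u L w) us0); split.
- by exists us0.
- apply/hasP => -[u]; rewrite mem_filter => /andP [/negPf Lu _]; by rewrite /lderiv cats0 Lu.
- move=> u nLu w Luw; apply/hasP.
  have [u' Hw Hr] := witS u.
  have inws : u' \in ws by rewrite mem_pmap; apply/mapP; exists (dfa_run d q0 u); rewrite ?mem_enum.
  exists u'; first by rewrite mem_filter inws andbT hL Hr -hL.
  by rewrite /lderiv hL (dfa_run_cat d) Hr -(dfa_run_cat d) -hL.
Qed.
End LQ.

Section DirA.
Variable Sigma : finType.
Variable L : lang Sigma.
Hypothesis hreg : regular L.

Lemma dirA n : nsyn_degree L n -> subatomic_size L n.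
Proof.
move=> [S [rho [hjp [hr0 hrC] hsyn [f [hf0 hfU hfI hfD]] hdeg]]].
have [K0 [K0LQ K0e K0P]] := K0_exists hreg.
pose m := f K0.
pose acc (s : S) := ~~ le s m.
have acc0 : acc (jbot S) = false by rewrite /acc le_bot.
have accJ x y : acc (jjoin x y) = acc x || acc y by rewrite /acc le_join negb_and.
have accf K : inLQ L K -> acc (f K) = K [::].
  move=> HK; rewrite /acc /m /le -hfU //.
  case KE: (K [::]).
    apply/negP => /eqP Hf; have := hfI _ _ (LQ_union HK K0LQ) K0LQ Hf [::].
    by rewrite /lunion KE K0e.
  have -> : lunion K K0 = K0; last by rewrite eqxx.
  apply: functional_extensionality => w; rewrite /lunion.
  case Kw: (K w) => //=.
  move: HK => [us Hus]; move: Kw; rewrite Hus => /hasP [u uin Luw].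
  suff -> : K0 w by [].
  apply: (K0P u _ w Luw).
  apply/negP => Lu; move: KE; rewrite Hus => /negbT /hasPn /(_ u uin).
  by rewrite /lderiv cats0 Lu.
pose lang_ (s : S) (w : word Sigma) := acc (rho w s).
have lang0 w : lang_ (jbot S) w = false by rewrite /lang_ (proj1 (hjp w)) acc0.
have langJ x y w : lang_ (jjoin x y) w = lang_ x w || lang_ y w.
  by rewrite /lang_ (proj2 (hjp w)) accJ.
have langf K w : inLQ L K -> lang_ (f K) w = K w.
  move=> HK; rewrite /lang_ -hfD // accf; last exact: LQ_lderiv.
  by rewrite /lderiv cats0.
pose A := @Nfa Sigma {x : S | join_irr x}
   (fun a j j' => le (val j') (rho [:: a] (val j)))
   (fun j => le (val j) (f L)) (fun j => acc (val j)).
have accA (j : nstate A) x : nfa_acc j x = lang_ (val j) x.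
  elim: x j => [|a w IH] j /=; first by rewrite /lang_ hr0.
  rewrite /lang_ (_ : a :: w = [:: a] ++ w) // hrC -/(lang_ (rho [:: a] (val j)) w).
  rewrite (decomp lang0 langJ); apply/existsP/existsP.
    by move=> [j' /andP [H1 H2]]; exists (val j'); rewrite (valP j') H1 -IH.
  move=> [j' /and3P [H1 H2 H3]]; exists (Sub j' H1); rewrite IH /=.
  by rewrite H2 H3.
exists A; split.
- move=> w; rewrite -(langf L w (LQ_L L)) (decomp lang0 langJ); apply/existsP/existsP.
    by move=> [j /and3P [H1 H2 H3]]; exists (Sub j H1); rewrite accA /= H2 H3.
  move=> [j /andP [H1 H2]]; exists (val j); apply/and3P; split => //; [exact: valP | by rewrite -accA].
- move=> j; apply: (ba_ext (K := lang_ (val j))); last by move=> w; rewrite accA.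
  apply: syn_closed_ba => // v w Hs; by rewrite /lang_ (hsyn v w Hs).
- by rewrite /= card_sig -hdeg.
Qed.
End DirA.

Section DirB.
Variable Sigma : finType.
Variable L : lang Sigma.
Variable A : nfa Sigma.
Hypothesis hacc : nfa_accepts A L.
Hypothesis hsub : subatomic A L.

Local Notation Q := (nstate A).
Definition U (X : {set Q}) : lang Sigma := fun w => [exists q in X, nfa_acc q w].
Definition C (K : lang Sigma) : {set Q} := [set q | pdec (forall w, nfa_acc q w -> K w)].
Definition repr (K : lang Sigma) := exists X : {set Q}, forall w, K w = U X w.

Lemma UC K w : U (C K) w -> K w.
Proof. by move=> /existsP [q /andP []]; rewrite inE => /pdecP H /H. Qed.
Lemma sub_CU (X : {set Q}) : X \subset C (U X).
Proof. apply/subsetP => q qX; rewrite inE; apply/pdecP => w Hw; apply/existsP; exists q; by rewrite qX. Qed.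
Lemma C_ext K K' : (forall w, K w = K' w) -> C K = C K'.
Proof. move=> H; apply/setP => q; rewrite !inE; apply: pdec_iff; split => H' w Hw; [rewrite -H | rewrite H]; exact: H' w Hw. Qed.
Lemma CUC K : C (U (C K)) = C K.
Proof.
apply/eqP; rewrite eqEsubset sub_CU andbT; apply/subsetP => q; rewrite !inE.
move=> /pdecP H; apply/pdecP => w /H; exact: UC.
Qed.
Lemma U_CU (X : {set Q}) w : U (C (U X)) w = U X w.
Proof.
apply/idP/idP; first exact: UC.
move=> /existsP [q /andP [qX Hq]]; apply/existsP; exists q; rewrite Hq andbT.
exact: (subsetP (sub_CU X)).
Qed.

Definition T := {X : {set Q} | C (U X) == X}.
Definition elt (K : lang Sigma) : T := exist _ (C K) (introT eqP (CUC K)).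
Definition lg (e : T) : lang Sigma := U (val e).
Lemma val_elt (e : T) : val e = C (lg e).
Proof. by rewrite /lg (eqP (valP e)). Qed.
Lemma lg_inj e e' : (forall w, lg e w = lg e' w) -> e = e'.
Proof. by move=> H; apply: val_inj; rewrite !val_elt (C_ext H). Qed.
Lemma lg_elt K w : repr K -> lg (elt K) w = K w.
Proof. by move=> [X HX]; rewrite /lg /= (C_ext HX) U_CU HX. Qed.
Lemma repr_lg e : repr (lg e). Proof. by exists (val e). Qed.

Definition jn (e e' : T) : T := elt (lunion (lg e) (lg e')).
Definition bt : T := elt (@lempty Sigma).
Lemma repr_union K K' : repr K -> repr K' -> repr (lunion K K').
Proof.
move=> [X HX] [Y HY]; exists (X :|: Y) => w; rewrite /lunion HX HY /U.
apply/orP/existsP.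
  by move=> [] /existsP [q /andP [H1 H2]]; exists q; rewrite inE H1 ?orbT H2.
by move=> [q /andP []]; rewrite inE => /orP [] H1 H2; [left|right]; apply/existsP; exists q; rewrite H1.
Qed.
Lemma repr_empty : repr (@lempty Sigma).
Proof. exists set0 => w; apply/esym/existsP => -[q]; by rewrite inE. Qed.
Lemma lg_jn e e' w : lg (jn e e') w = lg e w || lg e' w.
Proof. by rewrite lg_elt //; apply: repr_union; apply: repr_lg. Qed.
Lemma lg_bt w : lg bt w = false.
Proof. by rewrite lg_elt //; apply: repr_empty. Qed.

Lemma jnA : associative jn.
Proof. by move=> x y z; apply: lg_inj => w; rewrite !lg_jn orbA. Qed.
Lemma jnC : commutative jn.
Proof. by move=> x y; apply: lg_inj => w; rewrite !lg_jn orbC. Qed.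
Lemma jnI : idempotent_op jn.
Proof. by move=> x; apply: lg_inj => w; rewrite !lg_jn orbb. Qed.
Lemma jn0 : left_id bt jn.
Proof. by move=> x; apply: lg_inj => w; rewrite !lg_jn lg_bt. Qed.

Definition SJ : jsl := @JSL T jn bt jnA jnC jnI jn0.

Fixpoint path (q : Q) (w : word Sigma) (q' : Q) : bool :=
  if w is a :: w' then [exists q'', ndelta a q q'' && path q'' w' q'] else q == q'.

Lemma acc_cat q u v : nfa_acc q (u ++ v) = [exists q', path q u q' && nfa_acc q' v].
Proof.
elim: u q => [|a u IH] q /=.
  apply/idP/existsP; first by move=> H; exists q; rewrite eqxx.
  by move=> [q' /andP [/eqP -> ]].
apply/existsP/existsP.
  move=> [q'' /andP [H1]]; rewrite IH => /existsP [q' /andP [H2 H3]].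
  by exists q'; rewrite H3 andbT; apply/existsP; exists q''; rewrite H1.
move=> [q' /andP [/existsP [q'' /andP [H1 H2]] H3]].
by exists q''; rewrite H1 IH; apply/existsP; exists q'; rewrite H2.
Qed.

Definition post (X : {set Q}) (u : word Sigma) : {set Q} := [set q' | [exists q in X, path q u q']].
Lemma U_post (X : {set Q}) u v : U (post X u) v = U X (u ++ v).
Proof.
apply/existsP/existsP.
  move=> [q' /andP []]; rewrite inE => /existsP [q /andP [H1 H2]] H3.
  by exists q; rewrite H1 acc_cat; apply/existsP; exists q'; rewrite H2.
move=> [q /andP [H1]]; rewrite acc_cat => /existsP [q' /andP [H2 H3]].
by exists q'; rewrite H3 andbT inE; apply/existsP; exists q; rewrite H1.
Qed.
Lemma repr_lderiv u K : repr K -> repr (lderiv u K).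
Proof. by move=> [X HX]; exists (post X u) => w; rewrite U_post /lderiv HX. Qed.

Lemma repr_LQ K : inLQ L K -> repr K.
Proof.
move=> [us Hus].
pose I : {set Q} := [set q | ninit q].
exists [set q | has (fun u => q \in post I u) us] => w; rewrite Hus.
have E u : lderiv u L w = U (post I u) w.
  rewrite U_post /lderiv hacc; apply/existsP/existsP.
    by move=> [q /andP [H1 H2]]; exists q; rewrite inE H1.
  by move=> [q /andP []]; rewrite inE => H1 H2; exists q; rewrite H1.
apply/hasP/existsP.
  move=> [u uin]; rewrite E => /existsP [q /andP [H1 H2]].
  by exists q; rewrite H2 andbT inE; apply/hasP; exists u.
move=> [q /andP []]; rewrite inE => /hasP [u uin H1] H2.
by exists u => //; rewrite E; apply/existsP; exists q; rewrite H1.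
Qed.

Definition rh (w : word Sigma) (e : T) : T := elt (lderiv w (lg e)).
Lemma lg_rh w e v : lg (rh w e) v = lg e (w ++ v).
Proof. by rewrite lg_elt //; apply/repr_lderiv/repr_lg. Qed.

Definition g (q : Q) : T := elt (nfa_acc q).
Lemma lg_g q w : lg (g q) w = nfa_acc q w.
Proof.
rewrite lg_elt //; exists [set q] => v; apply/idP/existsP.
  by move=> H; exists q; rewrite inE eqxx.
by move=> [q' /andP []]; rewrite inE => /eqP ->.
Qed.

Lemma lg_fold s w : lg (foldr jn bt (map g s)) w = has (fun q => nfa_acc q w) s.
Proof. by elim: s => [|q s IH] /=; rewrite ?lg_bt // lg_jn IH lg_g. Qed.

Lemma JI_fold (e : SJ) s : join_irr e -> e = foldr jn bt (map g s) -> e \in map g s.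
Proof.
move=> /andP [nb /forallP H]; elim: s => [|q s IH] /=.
  by move=> E; move: nb; rewrite E eqxx.
move=> E; move: (H (g q)) => /forallP /(_ (foldr jn bt (map g s))).
rewrite {1}E eqxx /= => /orP [/eqP -> | /eqP E']; first by rewrite inE eqxx.
by rewrite inE IH ?orbT.
Qed.

Lemma deg_SJ : degree SJ <= #|Q|.
Proof.
rewrite /degree; apply: (leq_trans (n := #|codom g|)); last by rewrite -(size_codom g) card_size.
apply: subset_leq_card; apply/subsetP => e; rewrite inE => He.
have : e \in map g (enum (val e)).
  apply: JI_fold => //; apply: lg_inj => w; rewrite lg_fold /lg /U.
  apply/existsP/hasP.
    by move=> [q /andP [H1 H2]]; exists q; rewrite ?mem_enum.
  by move=> [q]; rewrite mem_enum => H1 H2; exists q; rewrite H1.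
by move=> /mapP [q _ ->]; apply: codom_f.
Qed.

Lemma dirB : nsyn_degree L (degree SJ).
Proof.
exists SJ, rh; split => //.
- move=> w; split; first by apply: lg_inj => v; rewrite lg_rh !lg_bt.
  by move=> x y; apply: lg_inj => v; rewrite /= lg_rh !lg_jn !lg_rh.
- split; first by move=> s; apply: lg_inj => v; rewrite lg_rh.
  by move=> v w s; apply: lg_inj => u; rewrite !lg_rh catA.
- move=> v w Hs s; apply: lg_inj => u; rewrite !lg_rh /lg /U.
  apply: eq_existsb => q; congr (_ && _).
  exact: (ba_syn (hsub q) Hs).
- exists elt; split => //.
  + move=> K K' HK HK'; have rK := repr_LQ HK; have rK' := repr_LQ HK'.
    by apply: lg_inj => w; rewrite lg_jn !lg_elt //; apply: repr_union.
  + move=> K K' HK HK' E w; rewrite -(lg_elt w (repr_LQ HK)) E; exact: lg_elt (repr_LQ HK').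
  + move=> w K HK; have rK := repr_LQ HK.
    by apply: lg_inj => v; rewrite lg_rh !lg_elt //; apply: repr_lderiv.
Qed.
End DirB.

Lemma least_ex (P : nat -> Prop) : (exists n, P n) -> exists n, least P n.
Proof.
move=> H; have H' : exists n, pdec (P n) by case: H => n Hn; exists n; apply/pdecP.
case: (ex_minnP H') => n /pdecP Pn Hmin; exists n; split => // m Pm.
by apply: Hmin; apply/pdecP.
Qed.

Section Ne.
Variable Sigma : finType.
Variable L : lang Sigma.

Lemma sub_nonempty : regular L -> exists n, subatomic_size L n.
Proof.
move=> hreg; have [Q [d [q0 [F hL]]]] := hreg.
pose reach q := pdec (exists u, dfa_run d q0 u = q).
pose A := @Nfa Sigma Q (fun a q q' => reach q && (q' == d a q)) (fun q => q == q0)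
   (fun q => reach q && F q).
have reachS q a : reach q -> reach (d a q).
  move=> /pdecP [u Hu]; apply/pdecP; exists (u ++ [:: a]).
  by rewrite (dfa_run_cat d) Hu.
have accR (q : nstate A) w : reach q -> nfa_acc q w = F (dfa_run d q w).
  elim: w q => [|a w IH] q Hq /=; first by rewrite Hq.
  apply/existsP/idP.
    by move=> [q' /andP [/andP [_ /eqP ->]]]; rewrite IH // reachS.
  by move=> H; exists (d a q); rewrite Hq eqxx /= IH // reachS.
have accN (q : nstate A) w : ~~ reach q -> nfa_acc q w = false.
  case: w => [|a w] /= /negPf Hq; first by rewrite Hq.
  by apply/existsP => -[q']; rewrite Hq.
have r0 : reach q0 by apply/pdecP; exists [::].
exists #|Q|, A; split => //.
- move=> w; rewrite hL; apply/idP/existsP.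
    by move=> H; exists q0; apply/andP; split; [exact: eqxx | rewrite accR].
  by move=> [q /andP [/eqP -> H]]; rewrite -accR.
- move=> q; apply: syn_closed_ba => // v w Hs.
  case: (boolP (reach q)) => Hq; last by rewrite !accN.
  move: (Hq) => /pdecP [u Hu]; rewrite !accR // -Hu -!(dfa_run_cat d) -!hL.
  by have := Hs u [::]; rewrite !cats0.
Qed.
End Ne.

Theorem theorem4p13 (Sigma : finType) (L : lang Sigma) :
  regular L -> exists n, least (nsyn_degree L) n /\ least (subatomic_size L) n.
Proof.
move=> hreg.
have [n2 [S2 M2]] := least_ex (sub_nonempty hreg).
have [A [hacc hsub hcard]] := S2.
have hB := dirB hacc hsub.
have hdeg : degree (SJ A) <= #|nstate A| := deg_SJ A.
have [n1 [S1 M1]] := least_ex (ex_intro _ _ hB).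
have le12 : n1 <= n2 by rewrite -hcard; apply: leq_trans hdeg; apply: M1.
have le21 : n2 <= n1 by apply: M2; apply: dirA.
have E : n1 = n2 by apply/eqP; rewrite eqn_leq le12 le21.
exists n2; split; last by [].
by rewrite -E.
Qed.
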